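(* Let $\varepsilon>0$ and let $k\ge2$ be even. There exist a threshold $\theta$, a sequence $Q$ of $k$ counting queries (each of sensitivity $1$), and datasets such that BinarySVT$(\cdot,Q,\theta,\lambda)$ (described below) does not satisfy $\varepsilon$-differential privacy whenever $\lambda\le\frac{k}{4\varepsilon}$.
   Context: $\mathrm{Lap}(\lambda)$ is the Laplace distribution with density $\frac{1}{2\lambda}e^{-|y|/\lambda}$. A dataset is a finite multiset of tuples; two datasets are neighboring if one is obtained by inserting one tuple into the other. A counting query $q$ maps a dataset to the number of its tuples satisfying some predicate. BinarySVT$(D,Q=(q_1,\dots,q_k),\theta,\lambda)$: draw $\hat\theta=\theta+\mathrm{Lap}(\lambda)$ once; then for $i=1,\dots,k$ draw $\hat q_i(D)=q_i(D)+\mathrm{Lap}(\lambda)$ (all noises independent) and output $o_i=1$ if $\hat q_i(D)>\hat\theta$ and $o_i=0$ otherwise. The output is $(o_1,\dots,o_k)$. An algorithm $\mathcal{A}$ is $\varepsilon$-differentially private if for all neighboring $D,D'$ and all outputs $O$, $\Pr[\mathcal{A}(D)=O]\le e^{\varepsilon}\Pr[\mathcal{A}(D')=O]$. *)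

(* Defs.v *)
From Stdlib Require Import Reals Lra Lia List Permutation Arith.
Import ListNotations.
Open Scope R_scope.

(* Tuples are natural numbers; a dataset is a finite multiset of tuples,
   represented as a list (up to permutation). *)
Definition dataset := list nat.

Definition count_query (P : nat -> bool) (D : dataset) : nat :=
  length (filter P D).

Definition neighboring (D D' : dataset) : Prop :=
  exists x : nat, Permutation D' (x :: D) \/ Permutation D (x :: D').

Definition lap_density (lam y : R) : R := / (2 * lam) * exp (- Rabs y / lam).

Definition lap_tail (lam x : R) : R :=
  if Rle_dec 0 x then / 2 * exp (- x / lam) else 1 - / 2 * exp (x / lam).

(* Conditional probability, given the noisy threshold t, that query value v
   produces output bit o: Pr[v + Lap(lam) > t] if o = true, else its
   complement. *)
Definition bit_prob (lam v t : R) (o : bool) : R :=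
  if o then lap_tail lam (t - v) else 1 - lap_tail lam (t - v).

(* Integrand in the noisy threshold t = theta + Lap(lam): density of the
   noisy threshold times the (conditionally independent) output-bit
   probabilities. *)
Definition svt_integrand (D : dataset) (Q : list (nat -> bool)) (theta lam : R)
  (O : list bool) (t : R) : R :=
  if Nat.eqb (length O) (length Q) then
    lap_density lam (t - theta) *
    fold_right Rmult 1
      (map (fun qo : (nat -> bool) * bool =>
              bit_prob lam (INR (count_query (fst qo) D)) t (snd qo))
           (combine Q O))
  else 0.

Definition improper_integral (f : R -> R) (I : R) : Prop :=
  (forall a b : R, inhabited (Riemann_integrable f a b)) /\
  forall e : R, 0 < e -> exists M : R,
    forall (a b : R) (pr : Riemann_integrable f a b),
      a <= - M -> M <= b -> Rabs (RiemannInt pr - I) < e.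

(* svt_prob D Q theta lam O p : Pr[BinarySVT(D,Q,theta,lam) = O] = p. *)
Definition svt_prob (D : dataset) (Q : list (nat -> bool)) (theta lam : R)
  (O : list bool) (p : R) : Prop :=
  improper_integral (svt_integrand D Q theta lam O) p.

(* Main.v *)
Require Import Defs.
From Stdlib Require Import Reals Lra Lia List Permutation Arith FunctionalExtensionality.
From Coquelicot Require Import Coquelicot.
Import ListNotations.
Open Scope R_scope.

Lemma cplus (f g : R -> R) (x:R) : continuous f x -> continuous g x -> continuous (fun y => f y + g y) x.
Proof. intros; apply (continuous_plus f g); auto. Qed.
Lemma cmult (f g : R -> R) (x:R) : continuous f x -> continuous g x -> continuous (fun y => f y * g y) x.
Proof. intros; apply (continuous_mult f g); auto. Qed.
Lemma cminus (f g : R -> R) (x:R) : continuous f x -> continuous g x -> continuous (fun y => f y - g y) x.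
Proof. intros; apply (continuous_minus f g); auto. Qed.
Lemma cdiv (f : R -> R) (c x:R) : continuous f x -> continuous (fun y => f y / c) x.
Proof. intros; apply cmult; auto; apply continuous_const. Qed.
Lemma copp (f : R -> R) (x:R) : continuous f x -> continuous (fun y => - f y) x.
Proof. intros; apply (continuous_opp f); auto. Qed.
Lemma cpow (f : R -> R) n (x:R) : continuous f x -> continuous (fun y => f y ^ n) x.
Proof. intros; induction n; simpl. apply continuous_const. apply cmult; auto. Qed.
Ltac cont1 := match goal with
 | |- continuous (fun _ => _ + _) _ => apply cplus
 | |- continuous (fun _ => _ - _) _ => apply cminus
 | |- continuous (fun _ => _ / _) _ => apply cdiv
 | |- continuous (fun _ => _ * _) _ => apply cmult
 | |- continuous (fun _ => - _) _ => apply copp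
 | |- continuous (fun _ => _ ^ _) _ => apply cpow
 | |- continuous (fun _ => exp _) _ => apply continuous_exp_comp
 | |- continuous (fun _ => Rabs _) _ => apply continuous_Rabs_comp
 | |- continuous (fun y => y) _ => apply continuous_id
 | |- continuous Rabs _ => apply continuous_Rabs
 | |- continuous exp _ => apply continuous_exp
 | |- continuous (fun _ => _) _ => apply continuous_const
 end.
Ltac cont := repeat cont1.

Lemma exR (h : R -> R) a b : (forall z, Rmin a b <= z <= Rmax a b -> continuous h z) -> ex_RInt h a b.
Proof. intros; apply (ex_RInt_continuous (V:=R_CompleteNormedModule)); auto. Qed.

Lemma exp_le' x y : x <= y -> exp x <= exp y.
Proof. intros H; destruct (Rle_lt_or_eq_dec _ _ H) as [H1|H1].
  left; apply exp_increasing; auto. subst; lra. Qed.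

Lemma div_le_l l x y : 0 < l -> x <= y -> x / l <= y / l.
Proof. intros; unfold Rdiv; apply Rmult_le_compat_r; auto. left; apply Rinv_0_lt_compat; auto. Qed.

Lemma tail_right (h : R -> R) (K c l : R) :
  0 < l -> (forall x, continuous h x) ->
  (forall t, Rabs (h t) <= K * exp (- Rabs (t - c) / l)) ->
  forall d x y, c <= d -> d <= x -> d <= y ->
  Rabs (RInt h x y) <= K * l * exp (- (d - c) / l).
Proof.
  intros Hl Hc Hb d.
  assert (Hex: forall a b, ex_RInt h a b) by (intros; apply exR; auto).
  assert (K0: 0 <= K).
  { specialize (Hb c). replace (c - c) with 0 in Hb by ring. rewrite Rabs_R0 in Hb.
    replace (- 0 / l) with 0 in Hb by (field; lra). rewrite exp_0 in Hb.
    pose proof (Rabs_pos (h c)). lra. }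
  assert (main: forall x y, c <= d -> d <= x <= y -> Rabs (RInt h x y) <= K * l * exp (- (d - c) / l)).
  { intros x y Hcd [Hdx Hxy].
    eapply Rle_trans. apply abs_RInt_le; auto.
    eapply Rle_trans. apply RInt_le with (g := fun t => K * exp (-(t - c)/l)); auto.
    - apply exR; intros; apply continuous_Rabs_comp; auto.
    - apply exR; intros; cont.
    - intros t Ht. eapply Rle_trans. apply Hb. rewrite Rabs_pos_eq by lra. lra.
    - assert (E: RInt (fun t => K * exp (-(t - c)/l)) x y =
                 K * l * (exp (-(x - c)/l) - exp (-(y - c)/l))).
      { apply is_RInt_unique.
        replace (K * l * (exp (-(x - c)/l) - exp (-(y - c)/l))) with
          (minus ((fun t => - K * l * exp (-(t - c)/l)) y) ((fun t => - K * l * exp (-(t - c)/l)) x))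
          by (unfold minus, plus, opp; simpl; ring).
        apply (is_RInt_derive (V:=R_CompleteNormedModule) (fun t => - K * l * exp (-(t - c)/l))) .
        + intros z _. auto_derive; auto. unfold Rminus, Rdiv; field; lra.
        + intros z _. cont. }
      rewrite E.
      assert (exp (- (x - c) / l) <= exp (- (d - c) / l)) by (apply exp_le'; apply div_le_l; lra).
      pose proof (exp_pos (- (y - c) / l)).
      assert (0 <= K * l) by (apply Rmult_le_pos; lra).
      nra. }
  intros x y Hcd Hdx Hdy.
  destruct (Rle_or_lt x y).
  - apply main; auto.
  - rewrite <- (opp_RInt_swap h y x) by auto. unfold opp; simpl. rewrite Rabs_Ropp.
    apply main; auto; lra.
Qed.

Lemma tail_left (h : R -> R) (K c l : R) :
  0 < l -> (forall x, continuous h x) ->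
  (forall t, Rabs (h t) <= K * exp (- Rabs (t - c) / l)) ->
  forall d x y, d <= c -> x <= d -> y <= d ->
  Rabs (RInt h x y) <= K * l * exp ((d - c) / l).
Proof.
  intros Hl Hc Hb d.
  assert (Hex: forall a b, ex_RInt h a b) by (intros; apply exR; auto).
  assert (K0: 0 <= K).
  { specialize (Hb c). replace (c - c) with 0 in Hb by ring. rewrite Rabs_R0 in Hb.
    replace (- 0 / l) with 0 in Hb by (field; lra). rewrite exp_0 in Hb.
    pose proof (Rabs_pos (h c)). lra. }
  assert (main: forall x y, d <= c -> x <= y <= d -> Rabs (RInt h x y) <= K * l * exp ((d - c) / l)).
  { intros x y Hcd [Hdx Hxy].
    eapply Rle_trans. apply abs_RInt_le; auto.
    eapply Rle_trans. apply RInt_le with (g := fun t => K * exp ((t - c)/l)); auto.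
    - apply exR; intros; apply continuous_Rabs_comp; auto.
    - apply exR; intros; cont.
    - intros t Ht. eapply Rle_trans. apply Hb. rewrite Rabs_left1 by lra.
      replace (- - (t - c)) with (t - c) by ring. lra.
    - assert (E: RInt (fun t => K * exp ((t - c)/l)) x y =
                 K * l * (exp ((y - c)/l) - exp ((x - c)/l))).
      { apply is_RInt_unique.
        replace (K * l * (exp ((y - c)/l) - exp ((x - c)/l))) with
          (minus ((fun t => K * l * exp ((t - c)/l)) y) ((fun t => K * l * exp ((t - c)/l)) x))
          by (unfold minus, plus, opp; simpl; ring).
        apply (is_RInt_derive (V:=R_CompleteNormedModule) (fun t => K * l * exp ((t - c)/l))).
        + intros z _. auto_derive; auto. unfold Rminus, Rdiv; field; lra.
        + intros z _. cont. }
      rewrite E.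
      assert (exp ((y - c) / l) <= exp ((d - c) / l)) by (apply exp_le'; apply div_le_l; lra).
      pose proof (exp_pos ((x - c) / l)).
      assert (0 <= K * l) by (apply Rmult_le_pos; lra).
      nra. }
  intros x y Hcd Hdx Hdy.
  destruct (Rle_or_lt x y).
  - apply main; auto.
  - rewrite <- (opp_RInt_swap h y x) by auto. unfold opp; simpl. rewrite Rabs_Ropp.
    apply main; auto; lra.
Qed.

Lemma window (h : R -> R) (K c l : R) :
  0 < l -> (forall x, continuous h x) ->
  (forall t, Rabs (h t) <= K * exp (- Rabs (t - c) / l)) ->
  forall a b d n, 0 <= d -> d <= INR n -> a <= c - d -> c + d <= b ->
  Rabs (RInt h a b - RInt h (c - INR n) (c + INR n)) <= 2 * K * l * exp (- d / l).
Proof.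
  intros Hl Hc Hb a b d n Hd Hdn Ha Hbb.
  assert (Hex: forall a b, ex_RInt h a b) by (intros; apply exR; auto).
  assert (E1: RInt h a b = RInt h a (c - INR n) + RInt h (c - INR n) b)
    by (symmetry; apply (RInt_Chasles h); auto).
  assert (E2: RInt h (c - INR n) b = RInt h (c - INR n) (c + INR n) + RInt h (c + INR n) b)
    by (symmetry; apply (RInt_Chasles h); auto).
  rewrite E1, E2.
  pose proof (tail_left h K c l Hl Hc Hb (c - d) a (c - INR n) ltac:(lra) ltac:(lra) ltac:(lra)) as T1.
  pose proof (tail_right h K c l Hl Hc Hb (c + d) (c + INR n) b ltac:(lra) ltac:(lra) ltac:(lra)) as T2.
  replace ((c - d - c) / l) with (- d / l) in T1 by (field; lra).
  replace (- (c + d - c) / l) with (- d / l) in T2 by (field; lra).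
  replace (RInt h a (c - INR n) + (RInt h (c - INR n) (c + INR n) + RInt h (c + INR n) b) -
     RInt h (c - INR n) (c + INR n)) with (RInt h a (c - INR n) + RInt h (c + INR n) b) by ring.
  eapply Rle_trans. apply Rabs_triang. lra.
Qed.

Lemma small_exp (A e l : R) : 0 < e -> 0 < l -> exists d, 0 <= d /\ A * exp (- d / l) < e.
Proof.
  intros He Hl.
  exists (l * ((Rabs A + 1) / e)). split.
  - apply Rmult_le_pos; [lra|]. unfold Rdiv; apply Rmult_le_pos. pose proof (Rabs_pos A); lra.
    left; apply Rinv_0_lt_compat; auto.
  - set (x := (Rabs A + 1) / e).
    assert (Hx: 0 < x) by (unfold x; unfold Rdiv; apply Rmult_lt_0_compat; [pose proof (Rabs_pos A); lra| apply Rinv_0_lt_compat; auto]).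
    replace (- (l * x) / l) with (- x) by (field; lra).
    rewrite exp_Ropp.
    assert (Hex: x < exp x) by (pose proof (exp_ineq1 x ltac:(lra)); lra).
    assert (Hxe: x * e = Rabs A + 1) by (unfold x; field; lra).
    pose proof (exp_pos x).
    assert (A <= Rabs A) by apply Rle_abs.
    apply (Rmult_lt_reg_r (exp x)); auto.
    rewrite Rmult_assoc, Rinv_l by lra. nra.
Qed.

Lemma improper_exists (h : R -> R) (K c l : R) :
  0 < l -> (forall x, continuous h x) ->
  (forall t, Rabs (h t) <= K * exp (- Rabs (t - c) / l)) ->
  exists I, improper_integral h I.
Proof.
  intros Hl Hc Hb.
  set (u := (fun n : nat => RInt h (c - INR n) (c + INR n)) : nat -> R).
  assert (Hcau: Cauchy_crit u).
  { intros e He. destruct (small_exp (2 * K * l) e l He Hl) as [d [Hd Hde]].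
    destruct (INR_unbounded d) as [N HN]. exists N. intros n m Hn Hm.
    unfold R_dist, u.
    apply le_INR in Hn. apply le_INR in Hm.
    eapply Rle_lt_trans. apply (window h K c l Hl Hc Hb _ _ d m); lra. lra. }
  destruct (Stdlib.Reals.Rcomplete.R_complete u Hcau) as [I HI].
  exists I. split.
  - intros a b. constructor. apply ex_RInt_Reals_0. apply exR; auto.
  - intros e He.
    destruct (small_exp (2 * K * l) (e/2) l ltac:(lra) Hl) as [d [Hd Hde]].
    destruct (HI (e/2) ltac:(lra)) as [N0 HN0].
    destruct (INR_unbounded d) as [N1 HN1].
    set (n := Nat.max N0 N1).
    exists (Rabs c + d). intros a b pr Ha Hb'.
    rewrite <- (RInt_Reals h a b pr).
    assert (c <= Rabs c) by apply Rle_abs.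
    assert (- c <= Rabs c) by (rewrite <- Rabs_Ropp; apply Rle_abs).
    assert (HnN1: INR N1 <= INR n) by (apply le_INR; unfold n; lia).
    pose proof (window h K c l Hl Hc Hb a b d n Hd ltac:(lra) ltac:(lra) ltac:(lra)) as W.
    pose proof (HN0 n ltac:(unfold n; lia)) as W2. unfold R_dist, u in W2.
    replace (RInt h a b - I) with ((RInt h a b - RInt h (c - INR n) (c + INR n)) + (RInt h (c - INR n) (c + INR n) - I)) by ring.
    eapply Rle_lt_trans. apply Rabs_triang. lra.
Qed.

Definition G (l s : R) := / 2 * exp (- Rabs s / l) + 1 - exp (- (s + Rabs s) / (2 * l)).

Lemma G_neg l s : 0 < l -> s <= 0 -> G l s = / 2 * exp (s / l).
Proof. intros Hl Hs. unfold G. rewrite Rabs_left1 by lra.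
  replace (- (s + - s) / (2 * l)) with 0 by (field; lra). rewrite exp_0.
  replace (- - s / l) with (s / l) by (field; lra). field. Qed.

Lemma G_pos l s : 0 < l -> 0 <= s -> G l s = 1 - / 2 * exp (- s / l).
Proof. intros Hl Hs. unfold G. rewrite Rabs_pos_eq by lra.
  replace (- (s + s) / (2 * l)) with (- s / l) by (field; lra). field. Qed.

Lemma lap_tail_G l x : 0 < l -> lap_tail l x = G l (- x).
Proof. intros Hl. unfold lap_tail. destruct (Rle_dec 0 x).
  - rewrite G_neg by lra. reflexivity.
  - rewrite G_pos by lra. replace (- - x / l) with (x / l) by (field; lra). reflexivity. Qed.

Lemma G_sym l s : 0 < l -> G l s + G l (- s) = 1.
Proof. intros Hl. destruct (Rle_or_lt s 0).
  - rewrite G_neg, G_pos by lra. replace (- - s / l) with (s / l) by (field; lra). field.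
  - rewrite G_pos, G_neg by lra. field. Qed.

Lemma bit_false l v t : 0 < l -> bit_prob l v t false = G l (t - v).
Proof. intros Hl. unfold bit_prob. rewrite lap_tail_G by auto.
  pose proof (G_sym l (t - v) Hl). lra. Qed.

Lemma bit_true l v t : 0 < l -> bit_prob l v t true = G l (v - t).
Proof. intros Hl. unfold bit_prob. rewrite lap_tail_G by auto.
  f_equal; ring. Qed.

Lemma exp_le1 x : x <= 0 -> exp x <= 1.
Proof. intros; rewrite <- exp_0; apply exp_le'; auto. Qed.

Lemma G_bounds l s : 0 < l -> 0 < G l s <= 1.
Proof. intros Hl. destruct (Rle_or_lt s 0).
  - rewrite G_neg by lra. pose proof (exp_pos (s / l)).
    assert (exp (s / l) <= 1) by (apply exp_le1; unfold Rdiv; apply Rmult_le_0_r; [lra| left; apply Rinv_0_lt_compat; auto]).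
    lra.
  - rewrite G_pos by lra. pose proof (exp_pos (- s / l)).
    assert (exp (- s / l) <= 1) by (apply exp_le1; unfold Rdiv; apply Rmult_le_0_r; [lra| left; apply Rinv_0_lt_compat; auto]).
    lra. Qed.

Lemma G_mono l x y : 0 < l -> x <= y -> G l x <= G l y.
Proof. intros Hl Hxy. destruct (Rle_or_lt y 0); destruct (Rle_or_lt x 0).
  - rewrite !G_neg by lra. assert (exp (x / l) <= exp (y / l)) by (apply exp_le'; apply div_le_l; lra). lra.
  - lra.
  - rewrite G_neg, G_pos by lra.
    assert (exp (x / l) <= 1) by (apply exp_le1; unfold Rdiv; apply Rmult_le_0_r; [lra| left; apply Rinv_0_lt_compat; auto]).
    assert (exp (- y / l) <= 1) by (apply exp_le1; unfold Rdiv; apply Rmult_le_0_r; [lra| left; apply Rinv_0_lt_compat; auto]).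
    lra.
  - rewrite !G_pos by lra. assert (exp (- y / l) <= exp (- x / l)) by (apply exp_le'; apply div_le_l; lra). lra.
Qed.

Lemma G_cont l x : continuous (G l) x.
Proof. unfold G. cont. Qed.

Lemma combine_repeat_app {A B} (a : A) (x : B) m l1 l2 :
  combine (repeat a m ++ l1) (repeat x m ++ l2) = repeat (a, x) m ++ combine l1 l2.
Proof. induction m; simpl; auto. rewrite IHm; auto. Qed.

Lemma fold_mult_app (l1 l2 : list R) :
  fold_right Rmult 1 (l1 ++ l2) = fold_right Rmult 1 l1 * fold_right Rmult 1 l2.
Proof. induction l1; simpl. ring. rewrite IHl1; ring. Qed.

Lemma fold_mult_repeat (c : R) m : fold_right Rmult 1 (repeat c m) = c ^ m.
Proof. induction m; simpl; auto. rewrite IHm; auto. Qed.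

Lemma integrand_eq (D : dataset) (p1 p2 : nat -> bool) m th l t : 0 < l ->
  svt_integrand D (repeat p1 m ++ repeat p2 m) th l (repeat false m ++ repeat true m) t =
  lap_density l (t - th) * (G l (t - INR (count_query p1 D)) ^ m * G l (INR (count_query p2 D) - t) ^ m).
Proof.
  intros Hl. unfold svt_integrand.
  rewrite !length_app, !repeat_length, Nat.eqb_refl.
  f_equal.
  rewrite combine_repeat_app.
  replace (combine (repeat p2 m) (repeat true m)) with (repeat (p2, true) m ++ combine (@nil (nat -> bool)) (@nil bool))
    by (rewrite <- combine_repeat_app, !app_nil_r; auto).
  simpl combine. rewrite app_nil_r.
  rewrite map_app, !map_repeat, fold_mult_app, !fold_mult_repeat. simpl fst. simpl snd.
  rewrite bit_false, bit_true by auto. reflexivity.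
Qed.

Definition hN (l : R) (m : nat) (t : R) := lap_density l (t - 1) * (G l (t - 1) ^ m * G l (0 - t) ^ m).
Definition hP (l : R) (m : nat) (t : R) := lap_density l (t - 1) * (G l (t - 2) ^ m * G l (0 - t) ^ m).

Lemma cRminus (c x : R) : continuous (Rminus c) x.
Proof. apply (cminus (fun _ => c) (fun y => y)); cont. Qed.

Lemma hN_cont l m x : continuous (hN l m) x.
Proof. unfold hN, lap_density, G. cont; apply cRminus. Qed.
Lemma hP_cont l m x : continuous (hP l m) x.
Proof. unfold hP, lap_density, G. cont; apply cRminus. Qed.

Lemma pow01 a m : 0 < a <= 1 -> 0 < a ^ m <= 1.
Proof. intros H. split. apply pow_lt; lra. rewrite <- (pow1 m). apply pow_incr; lra. Qed.

Lemma prod_bound l m a b t : 0 < l ->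
  Rabs (lap_density l t * (G l a ^ m * G l b ^ m)) <= / (2 * l) * exp (- Rabs t / l).
Proof. intros Hl.
  pose proof (pow01 _ m (G_bounds l a Hl)). pose proof (pow01 _ m (G_bounds l b Hl)).
  unfold lap_density.
  assert (0 < / (2 * l)) by (apply Rinv_0_lt_compat; lra).
  pose proof (exp_pos (- Rabs t / l)).
  rewrite Rabs_pos_eq. 2:{ apply Rmult_le_pos. apply Rmult_le_pos; lra. apply Rmult_le_pos; lra. }
  assert (G l a ^ m * G l b ^ m <= 1) by nra.
  assert (0 <= / (2 * l) * exp (- Rabs t / l)) by nra.
  nra. Qed.

Lemma hN_bound l m t : 0 < l -> Rabs (hN l m t) <= / (2 * l) * exp (- Rabs (t - 1) / l).
Proof. intros; apply prod_bound; auto. Qed.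
Lemma hP_bound l m t : 0 < l -> Rabs (hP l m t) <= / (2 * l) * exp (- Rabs (t - 1) / l).
Proof. intros; apply prod_bound; auto. Qed.

Lemma hP_nonneg l m t : 0 < l -> 0 <= hP l m t.
Proof. intros Hl. unfold hP, lap_density.
  pose proof (pow01 _ m (G_bounds l (t-2) Hl)). pose proof (pow01 _ m (G_bounds l (0-t) Hl)).
  assert (0 < / (2 * l)) by (apply Rinv_0_lt_compat; lra).
  pose proof (exp_pos (- Rabs (t-1) / l)).
  apply Rmult_le_pos. apply Rmult_le_pos; lra. apply Rmult_le_pos; lra. Qed.

Lemma exp_pow a m : exp a ^ m = exp (INR m * a).
Proof. induction m. simpl. rewrite Rmult_0_l, exp_0; auto.
  rewrite S_INR. simpl. rewrite IHm, <- exp_plus. f_equal; ring. Qed.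

Lemma hN_hP l m t : 0 < l -> t <= 1 -> hN l m t = exp (1 / l) ^ m * hP l m t.
Proof. intros Hl Ht. unfold hN, hP.
  assert (G l (t - 1) = exp (1 / l) * G l (t - 2)).
  { rewrite !G_neg by lra. replace ((t - 1) / l) with (1 / l + (t - 2) / l) by (field; lra).
    rewrite exp_plus. ring. }
  rewrite H, Rpow_mult_distr. ring. Qed.

Lemma hP_refl l m t : hP l m (2 - t) = hP l m t.
Proof. unfold hP, lap_density.
  replace (2 - t - 1) with (- (t - 1)) by ring. rewrite Rabs_Ropp.
  replace (2 - t - 2) with (0 - t) by ring. replace (0 - (2 - t)) with (t - 2) by ring. ring. Qed.

Lemma hN_ge_hP l m t : 0 < l -> hP l m t <= hN l m t.
Proof. intros Hl. unfold hN, hP.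
  pose proof (G_bounds l (t-2) Hl). pose proof (G_mono l (t-2) (t-1) Hl ltac:(lra)).
  pose proof (pow_incr (G l (t-2)) (G l (t-1)) m ltac:(lra)).
  pose proof (pow01 _ m (G_bounds l (0-t) Hl)).
  unfold lap_density.
  assert (0 < / (2 * l)) by (apply Rinv_0_lt_compat; lra).
  pose proof (exp_pos (- Rabs (t-1) / l)).
  apply Rmult_le_compat_l. apply Rmult_le_pos; lra.
  apply Rmult_le_compat_r; lra. Qed.

Definition cLow l m := / (2 * l) * exp (- 1 / l) * ((/ 2 * exp (- 2 / l)) ^ m * (/ 2 * exp (- 1 / l)) ^ m).

Lemma cLow_pos l m : 0 < l -> 0 < cLow l m.
Proof. intros Hl. unfold cLow.
  assert (0 < / (2 * l)) by (apply Rinv_0_lt_compat; lra).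
  pose proof (exp_pos (-1/l)). pose proof (exp_pos (-2/l)).
  apply Rmult_lt_0_compat. apply Rmult_lt_0_compat; lra.
  apply Rmult_lt_0_compat; apply pow_lt; lra. Qed.

Lemma hP_lower l m t : 0 < l -> 0 <= t <= 1 -> cLow l m <= hP l m t.
Proof. intros Hl Ht. unfold cLow, hP, lap_density.
  rewrite !G_neg by lra.
  assert (0 < / (2 * l)) by (apply Rinv_0_lt_compat; lra).
  pose proof (exp_pos (-1/l)). pose proof (exp_pos (-2/l)).
  assert (exp (-1/l) <= exp (- Rabs (t - 1) / l)).
  { apply exp_le'. apply div_le_l; auto. rewrite Rabs_left1 by lra. lra. }
  assert (exp (-2/l) <= exp ((t - 2) / l)) by (apply exp_le'; apply div_le_l; lra).
  assert (exp (-1/l) <= exp ((0 - t) / l)) by (apply exp_le'; apply div_le_l; lra).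
  apply Rmult_le_compat.
  - apply Rmult_le_pos; lra.
  - apply Rmult_le_pos; apply pow_le; lra.
  - apply Rmult_le_compat_l; lra.
  - apply Rmult_le_compat. apply pow_le; lra. apply pow_le; lra.
    apply pow_incr; lra. apply pow_incr; lra.
Qed.

Lemma psi_lower eps l m t : 0 < eps -> 0 < l -> 2 * eps <= INR m / l -> t <= 1 ->
  (exp eps - 1) ^ 2 * hP l m t <=
  (hN l m t - exp eps * hP l m t) + (hN l m (2 - t) - exp eps * hP l m (2 - t)).
Proof. intros He Hl Hm Ht.
  rewrite (hN_hP l m t Hl Ht), hP_refl.
  pose proof (hN_ge_hP l m (2 - t) Hl). rewrite hP_refl in H.
  pose proof (hP_nonneg l m t Hl).
  assert (exp eps * exp eps <= exp (1 / l) ^ m).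
  { rewrite exp_pow, <- exp_plus. apply exp_le'. unfold Rdiv in *. lra. }
  pose proof (exp_pos eps).
  nra. Qed.

Lemma exAll (f : R -> R) a b : (forall x, continuous f x) -> ex_RInt f a b.
Proof. intros; apply exR; auto. Qed.

Lemma reflect_window (f : R -> R) N : (forall x, continuous f x) ->
  RInt f (1 - N) (1 + N) = RInt (fun t => f t + f (2 - t)) (1 - N) 1.
Proof.
  intros Hc.
  assert (Hc2: forall x, continuous (fun t => f (2 - t)) x).
  { intros x. apply (continuous_comp (fun t => 2 - t) f). cont. auto. }
  assert (H := RInt_comp_lin (V:=R_CompleteNormedModule) f (-1) 2 (1 - N) 1 (exAll f _ _ Hc)).
  replace (-1 * (1 - N) + 2) with (1 + N) in H by ring.
  replace (-1 * 1 + 2) with 1 in H by ring.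
  assert (H2: RInt (fun y : R => scal (-1) (f (-1 * y + 2))) (1 - N) 1 = - RInt (fun y => f (2 - y)) (1 - N) 1).
  { transitivity (RInt (fun y : R => scal (-1) (f (2 - y))) (1 - N) 1).
    apply RInt_ext; intros; do 2 f_equal; ring.
    rewrite (RInt_scal (V:=R_CompleteNormedModule)) by (apply exAll; auto).
    unfold scal; simpl; unfold mult; simpl. ring. }
  assert (H3: - RInt (fun y => f (2 - y)) (1 - N) 1 = RInt f (1 + N) 1) by (rewrite <- H2; exact H).
  clear H H2. rename H3 into H.
  rewrite <- (opp_RInt_swap (V:=R_CompleteNormedModule) f 1 (1 + N)) in H by (apply exAll; auto).
  unfold opp in H; simpl in H.
  rewrite <- (RInt_Chasles (V:=R_CompleteNormedModule) f (1 - N) 1 (1 + N)) by (apply exAll; auto).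
  rewrite (RInt_plus (V:=R_CompleteNormedModule)) by (apply exAll; auto).
  unfold plus; simpl. lra.
Qed.

Lemma window_ineq eps l m N : 0 < eps -> 0 < l -> 2 * eps <= INR m / l -> 1 <= N ->
  RInt (hN l m) (1 - N) (1 + N) - exp eps * RInt (hP l m) (1 - N) (1 + N) >= (exp eps - 1) ^ 2 * cLow l m.
Proof.
  intros He Hl Hm HN.
  set (phi := fun t => hN l m t - exp eps * hP l m t).
  assert (Hpc: forall x, continuous phi x).
  { intros x. unfold phi. apply (cminus (hN l m) (fun t => exp eps * hP l m t)).
    apply hN_cont. apply (cmult (fun _ => exp eps) (hP l m)). apply continuous_const. apply hP_cont. }
  assert (ex1: ex_RInt (hN l m) (1 - N) (1 + N)) by (apply exAll; apply hN_cont).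
  assert (ex3: ex_RInt (hP l m) (1 - N) (1 + N)) by (apply exAll; apply hP_cont).
  assert (ex2: ex_RInt (fun t => exp eps * hP l m t) (1 - N) (1 + N))
    by (apply exAll; intros; apply (cmult (fun _ => exp eps) (hP l m)); [apply continuous_const| apply hP_cont]).
  assert (A1 := RInt_minus (V:=R_CompleteNormedModule) (hN l m) (fun t => exp eps * hP l m t) (1-N) (1+N) ex1 ex2).
  assert (A2 := RInt_scal (V:=R_CompleteNormedModule) (hP l m) (1-N) (1+N) (exp eps) ex3).
  assert (E: RInt phi (1 - N) (1 + N) = RInt (hN l m) (1 - N) (1 + N) - exp eps * RInt (hP l m) (1 - N) (1 + N)).
  { assert (A2': RInt (fun t => exp eps * hP l m t) (1-N) (1+N) = exp eps * RInt (hP l m) (1-N) (1+N)) by exact A2.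
    assert (A1': RInt phi (1-N) (1+N) = RInt (hN l m) (1-N) (1+N) - RInt (fun t => exp eps * hP l m t) (1-N) (1+N)) by exact A1.
    lra. }
  rewrite <- E. rewrite (reflect_window phi N Hpc).
  set (psi := fun t => phi t + phi (2 - t)).
  assert (Hsc: forall x, continuous psi x).
  { intros x. unfold psi. apply (cplus phi (fun t => phi (2 - t))). auto.
    apply (continuous_comp (fun t => 2 - t) phi). cont. auto. }
  assert (Hpt: forall t, t <= 1 -> (exp eps - 1) ^ 2 * hP l m t <= psi t).
  { intros t Ht. unfold psi, phi. apply psi_lower; auto. }
  rewrite <- (RInt_Chasles (V:=R_CompleteNormedModule) psi (1 - N) 0 1) by (apply exAll; auto).
  unfold plus; simpl.
  assert (I1: 0 <= RInt psi (1 - N) 0).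
  { apply RInt_ge_0. lra. apply exAll; auto. intros x Hx.
    eapply Rle_trans; [| apply Hpt; lra].
    apply Rmult_le_pos. apply pow2_ge_0. apply hP_nonneg; auto. }
  assert (I2: RInt (fun _ => (exp eps - 1) ^ 2 * cLow l m) 0 1 <= RInt psi 0 1).
  { apply RInt_le. lra. apply exAll; intros; apply continuous_const. apply exAll; auto.
    intros x Hx. eapply Rle_trans; [| apply Hpt; lra].
    apply Rmult_le_compat_l. apply pow2_ge_0. apply hP_lower; auto; lra. }
  rewrite RInt_const in I2. unfold scal in I2; simpl in I2; unfold mult in I2; simpl in I2.
  lra.
Qed.

Lemma limit_cmp f g p q E d : improper_integral f p -> improper_integral g q -> 0 < d -> 0 <= E ->
  (forall N, 1 <= N -> RInt f (1 - N) (1 + N) - E * RInt g (1 - N) (1 + N) >= d) -> p > E * q.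
Proof.
  intros [Hf1 Hf2] [Hg1 Hg2] Hd HE HW.
  set (e := d / (2 * (1 + E))).
  assert (He: 0 < e) by (unfold e; apply Rdiv_lt_0_compat; lra).
  assert (Hed: d = 2 * (1 + E) * e) by (unfold e; field; lra).
  destruct (Hf2 e He) as [M1 HM1]; destruct (Hg2 e He) as [M2 HM2].
  set (N := 1 + Rabs M1 + Rabs M2).
  pose proof (Rle_abs M1). pose proof (Rle_abs M2).
  pose proof (Rabs_pos M1). pose proof (Rabs_pos M2).
  assert (- M1 <= Rabs M1) by (rewrite <- Rabs_Ropp; apply Rle_abs).
  assert (- M2 <= Rabs M2) by (rewrite <- Rabs_Ropp; apply Rle_abs).
  destruct (Hf1 (1 - N) (1 + N)) as [pr1]. destruct (Hg1 (1 - N) (1 + N)) as [pr2].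
  specialize (HM1 _ _ pr1 ltac:(unfold N; lra) ltac:(unfold N; lra)).
  specialize (HM2 _ _ pr2 ltac:(unfold N; lra) ltac:(unfold N; lra)).
  rewrite <- RInt_Reals in HM1, HM2.
  specialize (HW N ltac:(unfold N; lra)).
  apply Rabs_def2 in HM1. apply Rabs_def2 in HM2.
  set (a := RInt f (1 - N) (1 + N)) in *. set (b := RInt g (1 - N) (1 + N)) in *.
  assert (E * (b - q) >= - (E * e)) by nra.
  nra.
Qed.

Theorem lemma5 (eps : R) (k : nat) :
  0 < eps -> (2 <= k)%nat -> Nat.Even k ->
  exists (theta : R) (Q : list (nat -> bool)) (D D' : dataset),
    length Q = k /\ neighboring D D' /\
    forall lam : R, 0 < lam -> lam <= INR k / (4 * eps) ->
      exists (O : list bool) (pD pD' : R),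
        svt_prob D Q theta lam O pD /\ svt_prob D' Q theta lam O pD' /\
        pD > exp eps * pD'.
Proof.
  intros Heps Hk [m Hm].
  exists 1, (repeat (fun _ : nat => true) m ++ repeat (fun _ : nat => false) m), [0%nat], [0%nat; 0%nat].
  split; [| split].
  - rewrite length_app, !repeat_length. lia.
  - exists 0%nat. left. apply Permutation_refl.
  - intros l Hl Hlk.
    exists (repeat false m ++ repeat true m).
    assert (EN: svt_integrand [0%nat] (repeat (fun _ : nat => true) m ++ repeat (fun _ : nat => false) m) 1 l
                  (repeat false m ++ repeat true m) = hN l m).
    { apply functional_extensionality; intros t. rewrite integrand_eq by auto. unfold hN.
      replace (INR (count_query (fun _ : nat => true) [0%nat])) with 1 by reflexivity.
      replace (INR (count_query (fun _ : nat => false) [0%nat])) with 0 by reflexivity. reflexivity. }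
    assert (EP: svt_integrand [0%nat; 0%nat] (repeat (fun _ : nat => true) m ++ repeat (fun _ : nat => false) m) 1 l
                  (repeat false m ++ repeat true m) = hP l m).
    { apply functional_extensionality; intros t. rewrite integrand_eq by auto. unfold hP.
      replace (INR (count_query (fun _ : nat => true) [0%nat; 0%nat])) with 2 by (simpl; ring).
      replace (INR (count_query (fun _ : nat => false) [0%nat; 0%nat])) with 0 by reflexivity. reflexivity. }
    unfold svt_prob. rewrite EN, EP.
    destruct (improper_exists (hN l m) (/ (2 * l)) 1 l Hl (hN_cont l m) (fun t => hN_bound l m t Hl)) as [pD HpD].
    destruct (improper_exists (hP l m) (/ (2 * l)) 1 l Hl (hP_cont l m) (fun t => hP_bound l m t Hl)) as [pD' HpD'].
    exists pD, pD'. split; [auto | split; [auto |]].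
    assert (Hm2: 2 * eps <= INR m / l).
    { assert (INR k = 2 * INR m) by (rewrite Hm, mult_INR; simpl; ring).
      assert (4 * eps * l <= INR k).
      { apply (Rmult_le_compat_l (4 * eps)) in Hlk; [|lra].
        replace (4 * eps * (INR k / (4 * eps))) with (INR k) in Hlk by (field; lra). lra. }
      apply (Rmult_le_reg_r l); auto. replace (INR m / l * l) with (INR m) by (field; lra). lra. }
    apply (limit_cmp _ _ _ _ _ ((exp eps - 1) ^ 2 * cLow l m) HpD HpD').
    + apply Rmult_lt_0_compat. pose proof (exp_ineq1 eps ltac:(lra)). apply pow_lt. lra. apply cLow_pos; auto.
    + left; apply exp_pos.
    + intros N HN. apply window_ineq; auto.
Qed.
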